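(* Let $F(x)$ be a formula in prenex form with no free variables other than $x$, and let $\mathbf c$ be a nonempty finite set of object constants containing every object constant occurring in $F(x)$. (a) If the sentence $\forall xF(x)$ is safe, then $\forall xF(x)\leftrightarrow\bigwedge_{c\in\mathbf c}F(c)$ is derivable from $\mathit{SPP}_{\mathbf c}$ in $\mathbf{INT}^=+\mathrm{DE}$. (b) If the sentence $\exists xF(x)$ is safe, then $\exists xF(x)\leftrightarrow\bigvee_{c\in\mathbf c}F(c)$ is derivable from $\mathit{SPP}_{\mathbf c}$ in $\mathbf{INT}^=+\mathrm{DE}$.
   Context: Formulas are first-order formulas with object constants, predicate constants and equality, but no function constants of arity $>0$; primitive connectives $\bot,\land,\lor,\rightarrow$, quantifiers $\forall,\exists$; $\neg G$ is $G\rightarrow\bot$, $\top$ is $\bot\rightarrow\bot$, $G\leftrightarrow H$ is $(G\rightarrow H)\land(H\rightarrow G)$. Restricted variables: for quantifier-free $G$, $\mathrm{RV}(G)$ is: $\emptyset$ if $G$ is an equality between two variables; the set of variables of $G$ if $G$ is any other atomic formula; $\mathrm{RV}(\bot)=\emptyset$; $\mathrm{RV}(G\land H)=\mathrm{RV}(G)\cup\mathrm{RV}(H)$; $\mathrm{RV}(G\lor H)=\mathrm{RV}(G)\cap\mathrm{RV}(H)$; $\mathrm{RV}(G\rightarrow H)=\emptyset$. An occurrence of a subformula or variable is positive if the number of implications containing it in their antecedent is even, negative otherwise, and strictly positive if it is in the antecedent of no implication. A prenex sentence $Q_1x_1\cdots Q_nx_nM$ ($M$ quantifier-free, $x_i$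 distinct) is semi-safe if every strictly positive occurrence of every $x_i$ in $M$ belongs to a subformula $G\rightarrow H$ with $x_i\in\mathrm{RV}(G)$. Simplification transformations: $\neg\bot\mapsto\top$, $\neg\top\mapsto\bot$; $\bot\land G\mapsto\bot$, $G\land\bot\mapsto\bot$, $\top\land G\mapsto G$, $G\land\top\mapsto G$; $\bot\lor G\mapsto G$, $G\lor\bot\mapsto G$, $\top\lor G\mapsto\top$, $G\lor\top\mapsto\top$; $\bot\rightarrow G\mapsto\top$, $G\rightarrow\top\mapsto\top$, $\top\rightarrow G\mapsto G$. A variable $x$ is positively (resp. negatively) weakly restricted in a quantifier-free formula $G$ if the formula obtained from $G$ by first replacing every atomic formula $A$ of $G$ with $x\in\mathrm{RV}(A)$ by $\bot$ and then applying the simplification transformations is $\top$ (resp. $\bot$). A semi-safe prenex sentence $Q_1x_1\cdots Q_nx_nM$ is safe if for every occurrence of every variable $x_i$: (a) if $Q_i=\forall$, the occurrence belongs to a positive subformula (of the sentence) in which $x_i$ is positively weakly restricted, or to a negative subformula in which $x_i$ is negatively weakly restricted; (b) if $Q_i=\exists$, the occurrence belongs to a negative subformula in which $x_i$ is positively weakly restricted, or to a positive subformula in which $x_i$ is negatively weakly restricted. For a finite set $\mathbf c$ of object constants, $\mathit{in}_{\mathbf c}(x_1,\dots,x_m)$ is $\bigwedge_{1\le j\le m}\bigvee_{c\in\mathbf c}x_j=c$, and $\mathit{SPP}_{\mathbf c}$ is the conjunction of $\forall\mathbf x(p_i(\mathbf x)\rightarrow\mathit{in}_{\mathbf c}(\mathbf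 x))$ over all predicate constants $p_i$ occurring in $F(x)$. $\mathbf{INT}^=$ is intuitionistic predicate logic with equality; $\mathrm{DE}$ is the decidable equality axiom $x=y\lor x\neq y$. *)

(* Defs.v *)
From Stdlib Require Import List Arith Bool.
Import ListNotations.

Inductive term : Type := Var (v : nat) | Cst (c : nat).

(* a predicate constant is identified by its name p together with its arity
   (the length of the argument list) *)
Inductive form : Type :=
| Bot
| Atom (p : nat) (ts : list term)
| Eq (s t : term)
| And (A B : form)
| Or (A B : form)
| Imp (A B : form)
| All (x : nat) (A : form)
| Ex (x : nat) (A : form).

Definition Neg (A : form) : form := Imp A Bot.
Definition Top : form := Imp Bot Bot.
Definition Iff (A B : form) : form := And (Imp A B) (Imp B A).

Definition tvar (y : nat) (t : term) : bool :=
  match t with Var z => Nat.eqb z y | Cst _ => false end.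
Definition tcst (c : nat) (t : term) : bool :=
  match t with Cst d => Nat.eqb d c | Var _ => false end.
Definition is_var (t : term) : bool :=
  match t with Var _ => true | Cst _ => false end.

Fixpoint free (y : nat) (A : form) : bool :=
  match A with
  | Bot => false
  | Atom _ ts => existsb (tvar y) ts
  | Eq s t => tvar y s || tvar y t
  | And B C | Or B C | Imp B C => free y B || free y C
  | All x B | Ex x B => negb (Nat.eqb x y) && free y B
  end.

Fixpoint occ_cst (c : nat) (A : form) : bool :=
  match A with
  | Bot => false
  | Atom _ ts => existsb (tcst c) ts
  | Eq s t => tcst c s || tcst c t
  | And B C | Or B C | Imp B C => occ_cst c B || occ_cst c C
  | All _ B | Ex _ B => occ_cst c B
  end.

Fixpoint preds (A : form) : list (nat * nat) :=
  match A with
  | Bot | Eq _ _ => []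
  | Atom p ts => [(p, length ts)]
  | And B C | Or B C | Imp B C => preds B ++ preds C
  | All _ B | Ex _ B => preds B
  end.

Definition subst_t (x : nat) (t s : term) : term :=
  match s with Var z => if Nat.eqb z x then t else s | Cst _ => s end.

Fixpoint subst (x : nat) (t : term) (A : form) : form :=
  match A with
  | Bot => Bot
  | Atom p ts => Atom p (map (subst_t x t) ts)
  | Eq s u => Eq (subst_t x t s) (subst_t x t u)
  | And B C => And (subst x t B) (subst x t C)
  | Or B C => Or (subst x t B) (subst x t C)
  | Imp B C => Imp (subst x t B) (subst x t C)
  | All y B => if Nat.eqb y x then A else All y (subst x t B)
  | Ex y B => if Nat.eqb y x then A else Ex y (subst x t B)
  end.

Fixpoint free_for (t : term) (x : nat) (A : form) : bool :=
  match A with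
  | And B C | Or B C | Imp B C => free_for t x B && free_for t x C
  | All y B | Ex y B => negb (free x A) || (negb (tvar y t) && free_for t x B)
  | _ => true
  end.

Inductive Prov : list form -> form -> Prop :=
| P_ax G A : In A G -> Prov G A
| P_botE G A : Prov G Bot -> Prov G A
| P_andI G A B : Prov G A -> Prov G B -> Prov G (And A B)
| P_andE1 G A B : Prov G (And A B) -> Prov G A
| P_andE2 G A B : Prov G (And A B) -> Prov G B
| P_orI1 G A B : Prov G A -> Prov G (Or A B)
| P_orI2 G A B : Prov G B -> Prov G (Or A B)
| P_orE G A B C : Prov G (Or A B) -> Prov (A :: G) C -> Prov (B :: G) C -> Prov G C
| P_impI G A B : Prov (A :: G) B -> Prov G (Imp A B)
| P_impE G A B : Prov G (Imp A B) -> Prov G A -> Prov G B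
| P_allI G x y A :
    free_for (Var y) x A = true ->
    (forall C, In C G -> free y C = false) ->
    free y (All x A) = false ->
    Prov G (subst x (Var y) A) -> Prov G (All x A)
| P_allE G x t A : free_for t x A = true -> Prov G (All x A) -> Prov G (subst x t A)
| P_exI G x t A : free_for t x A = true -> Prov G (subst x t A) -> Prov G (Ex x A)
| P_exE G x y A B :
    free_for (Var y) x A = true ->
    (forall C, In C G -> free y C = false) ->
    free y (Ex x A) = false -> free y B = false ->
    Prov G (Ex x A) -> Prov (subst x (Var y) A :: G) B -> Prov G B
| P_eqR G t : Prov G (Eq t t)
| P_eqE G x s t A :
    free_for s x A = true -> free_for t x A = true ->
    Prov G (Eq s t) -> Prov G (subst x s A) -> Prov G (subst x t A)
| P_DE G s t : Prov G (Or (Eq s t) (Neg (Eq s t))).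

Inductive quant : Type := QAll | QEx.

Fixpoint qf (A : form) : bool :=
  match A with
  | All _ _ | Ex _ _ => false
  | And B C | Or B C | Imp B C => qf B && qf C
  | _ => true
  end.

Fixpoint strip (A : form) : list (quant * nat) * form :=
  match A with
  | All x B => ((QAll, x) :: fst (strip B), snd (strip B))
  | Ex x B => ((QEx, x) :: fst (strip B), snd (strip B))
  | _ => ([], A)
  end.
Definition prefix (A : form) := fst (strip A).
Definition matrix (A : form) := snd (strip A).

Definition prenex (A : form) : Prop := qf (matrix A) = true.
Definition sentence (A : form) : Prop := forall y, free y A = false.

(* y \in RV(G), for quantifier-free G *)
Fixpoint rv (y : nat) (G : form) : bool :=
  match G with
  | Bot => false
  | Atom _ ts => existsb (tvar y) ts
  | Eq s t => if is_var s && is_var t then false else tvar y s || tvar y t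
  | And A B => rv y A || rv y B
  | Or A B => rv y A && rv y B
  | Imp _ _ => false
  | All _ _ | Ex _ _ => false
  end.

(* every strictly positive occurrence of y in M belongs to a subformula
   G -> H with y \in RV(G) *)
Fixpoint ss (y : nat) (M : form) : bool :=
  match M with
  | Atom _ _ | Eq _ _ => negb (free y M)
  | And A B | Or A B => ss y A && ss y B
  | Imp A B => rv y A || ss y B
  | _ => true
  end.

Definition semi_safe (A : form) : Prop :=
  qf (matrix A) = true /\ sentence A /\ NoDup (map snd (prefix A)) /\
  (forall q y, In (q, y) (prefix A) -> ss y (matrix A) = true).

Definition is_bot (f : form) : bool := match f with Bot => true | _ => false end.
Definition is_top (f : form) : bool := match f with Imp Bot Bot => true | _ => false end.

Definition simp_and (A B : form) : form :=
  if is_bot A || is_bot B then Bot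
  else if is_top A then B else if is_top B then A else And A B.
Definition simp_or (A B : form) : form :=
  if is_bot A then B else if is_bot B then A
  else if is_top A || is_top B then Top else Or A B.
Definition simp_imp (A B : form) : form :=
  if is_bot A then Top else if is_top B then Top
  else if is_top A then B else Imp A B.

Fixpoint simp (G : form) : form :=
  match G with
  | And A B => simp_and (simp A) (simp B)
  | Or A B => simp_or (simp A) (simp B)
  | Imp A B => simp_imp (simp A) (simp B)
  | _ => G
  end.

Fixpoint kill (y : nat) (G : form) : form :=
  match G with
  | Atom _ _ | Eq _ _ => if rv y G then Bot else G
  | And A B => And (kill y A) (kill y B)
  | Or A B => Or (kill y A) (kill y B)
  | Imp A B => Imp (kill y A) (kill y B)
  | _ => G
  end.

Definition pwr (y : nat) (G : form) : bool := is_top (simp (kill y G)).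
Definition nwr (y : nat) (G : form) : bool := is_bot (simp (kill y G)).

Definition good (q : quant) (y : nat) (pos : bool) (S : form) : bool :=
  match q with
  | QAll => (pos && pwr y S) || (negb pos && nwr y S)
  | QEx => (negb pos && pwr y S) || (pos && nwr y S)
  end.

(* every occurrence of y in S belongs to a subformula of S satisfying good *)
Fixpoint sv (q : quant) (y : nat) (pos : bool) (S : form) : bool :=
  good q y pos S ||
  match S with
  | And A B | Or A B => sv q y pos A && sv q y pos B
  | Imp A B => sv q y (negb pos) A && sv q y pos B
  | Atom _ _ | Eq _ _ => negb (free y S)
  | _ => true
  end.

Definition safe (A : form) : Prop :=
  semi_safe A /\
  (forall q y, In (q, y) (prefix A) -> sv q y true (matrix A) = true).

Fixpoint bigAnd (l : list form) : form :=
  match l with [] => Top | [A] => A | A :: l' => And A (bigAnd l') end.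
Fixpoint bigOr (l : list form) : form :=
  match l with [] => Bot | [A] => A | A :: l' => Or A (bigOr l') end.

Definition in_c (cs : list nat) (vs : list nat) : form :=
  bigAnd (map (fun v => bigOr (map (fun c => Eq (Var v) (Cst c)) cs)) vs).

Definition allN (vs : list nat) (A : form) : form := fold_right All A vs.

Definition SPP (cs : list nat) (F : form) : form :=
  bigAnd (map (fun pn => let vs := seq 0 (snd pn) in
                 allN vs (Imp (Atom (fst pn) (map Var vs)) (in_c cs vs)))
              (preds F)).

(* Main.v *)
Require Import Defs.
From Stdlib Require Import List Arith Bool Lia.
Import ListNotations.

Definition D (H : list form) (A : form) := forall G, incl H G -> Prov G A.

Lemma D_ax H A : In A H -> D H A.
Proof. intros Hi G HG. apply P_ax. auto. Qed.
Lemma D_weak H H' A : incl H H' -> D H A -> D H' A.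
Proof. intros Hi HD G HG. apply HD. eapply incl_tran; eauto. Qed.
Lemma D_botE H A : D H Bot -> D H A.
Proof. intros HD G HG. apply P_botE; auto. Qed.
Lemma D_andI H A B : D H A -> D H B -> D H (And A B).
Proof. intros H1 H2 G HG. apply P_andI; auto. Qed.
Lemma D_andE1 H A B : D H (And A B) -> D H A.
Proof. intros H1 G HG. eapply P_andE1; eauto. Qed.
Lemma D_andE2 H A B : D H (And A B) -> D H B.
Proof. intros H1 G HG. eapply P_andE2; eauto. Qed.
Lemma D_orI1 H A B : D H A -> D H (Or A B).
Proof. intros H1 G HG. apply P_orI1; auto. Qed.
Lemma D_orI2 H A B : D H B -> D H (Or A B).
Proof. intros H1 G HG. apply P_orI2; auto. Qed.
Lemma incl_cc {T} (A : T) H G : incl H G -> incl (A :: H) (A :: G).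
Proof. intros HG. apply incl_cons. left; auto. apply incl_tl; auto. Qed.
Lemma D_orE H A B C : D H (Or A B) -> D (A :: H) C -> D (B :: H) C -> D H C.
Proof. intros H1 H2 H3 G HG. eapply P_orE; [apply H1; auto| apply H2 | apply H3];
  apply incl_cc; auto. Qed.
Lemma D_impI H A B : D (A :: H) B -> D H (Imp A B).
Proof. intros H1 G HG. apply P_impI. apply H1. apply incl_cc; auto. Qed.
Lemma D_impE H A B : D H (Imp A B) -> D H A -> D H B.
Proof. intros H1 H2 G HG. eapply P_impE; eauto. Qed.
Lemma D_allE H x t A : free_for t x A = true -> D H (All x A) -> D H (subst x t A).
Proof. intros H0 H1 G HG. apply P_allE; auto. Qed.
Lemma D_exI H x t A : free_for t x A = true -> D H (subst x t A) -> D H (Ex x A).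
Proof. intros H0 H1 G HG. eapply P_exI; eauto. Qed.
Lemma D_eqR H t : D H (Eq t t).
Proof. intros G HG. apply P_eqR. Qed.
Lemma D_eqE H x s t A : free_for s x A = true -> free_for t x A = true ->
  D H (Eq s t) -> D H (subst x s A) -> D H (subst x t A).
Proof. intros H0 H1 H2 H3 G HG. eapply P_eqE; [exact H0|exact H1|apply H2; auto|apply H3; auto]. Qed.
Lemma D_DE H s t : D H (Or (Eq s t) (Neg (Eq s t))).
Proof. intros G HG. apply P_DE. Qed.

Lemma D_id H A : D H (Imp A A).
Proof. apply D_impI, D_ax; left; auto. Qed.
Lemma D_mp H A B : D H (Imp A B) -> D (A :: H) B.
Proof. intros H1. eapply D_impE. eapply D_weak; [|exact H1]. apply incl_tl, incl_refl.
  apply D_ax; left; auto. Qed.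
Lemma D_trans H A B C : D H (Imp A B) -> D H (Imp B C) -> D H (Imp A C).
Proof. intros H1 H2. apply D_impI. eapply D_impE. eapply D_weak; [|exact H2].
  apply incl_tl, incl_refl. apply D_mp; auto. Qed.

Lemma subst_t_id z s : subst_t z (Var z) s = s.
Proof. destruct s; simpl; auto. destruct (Nat.eqb_spec v z); subst; auto. Qed.

Lemma subst_id z A : subst z (Var z) A = A.
Proof.
  induction A; simpl; try congruence.
  - f_equal. induction ts; simpl; auto. rewrite subst_t_id; congruence.
  - rewrite !subst_t_id; auto.
  - destruct (x =? z); congruence.
  - destruct (x =? z); congruence.
Qed.

Lemma free_for_self z A : free_for (Var z) z A = true.
Proof.
  induction A; simpl; auto; try (rewrite IHA1, IHA2; auto);
  destruct (Nat.eqb_spec z x); subst; try (rewrite Nat.eqb_refl; simpl; auto);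
  rewrite IHA; rewrite orb_true_r; auto.
Qed.

Lemma free_for_cst c x A : free_for (Cst c) x A = true.
Proof. induction A; simpl; auto; try (rewrite IHA1, IHA2; auto); rewrite IHA, orb_true_r; auto. Qed.

Lemma free_for_qf t x A : qf A = true -> free_for t x A = true.
Proof. induction A; simpl; auto; intros Hq; try discriminate; apply andb_true_iff in Hq; destruct Hq;
  rewrite IHA1, IHA2; auto. Qed.

Lemma tvar_subst_cst w x c s : tvar w (subst_t x (Cst c) s) = true -> tvar w s = true /\ w <> x.
Proof. destruct s; simpl; try discriminate. destruct (Nat.eqb_spec v x); simpl; try discriminate.
  intros Hw. apply Nat.eqb_eq in Hw. subst. split; auto. apply Nat.eqb_refl. Qed.

Lemma free_subst_cst w x c A : free w (subst x (Cst c) A) = true -> free w A = true /\ w <> x.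
Proof.
  induction A; simpl; try discriminate; intros Hf.
  - apply existsb_exists in Hf. destruct Hf as [s [Hs Ht]]. apply in_map_iff in Hs.
    destruct Hs as [s0 [<- Hs0]]. apply tvar_subst_cst in Ht. destruct Ht. split; auto.
    apply existsb_exists. eauto.
  - apply orb_true_iff in Hf. destruct Hf as [Hf|Hf]; apply tvar_subst_cst in Hf; destruct Hf;
    split; auto; rewrite H; auto with bool.
  - apply orb_true_iff in Hf. destruct Hf as [Hf|Hf]; [apply IHA1 in Hf|apply IHA2 in Hf];
    destruct Hf; split; auto; rewrite H; auto with bool.
  - apply orb_true_iff in Hf. destruct Hf as [Hf|Hf]; [apply IHA1 in Hf|apply IHA2 in Hf];
    destruct Hf; split; auto; rewrite H; auto with bool.
  - apply orb_true_iff in Hf. destruct Hf as [Hf|Hf]; [apply IHA1 in Hf|apply IHA2 in Hf];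
    destruct Hf; split; auto; rewrite H; auto with bool.
  - destruct (Nat.eqb_spec x0 x).
    + subst. simpl in Hf. split; auto. apply andb_true_iff in Hf. destruct Hf as [Hf _].
      intro; subst. rewrite Nat.eqb_refl in Hf; discriminate.
    + simpl in Hf. apply andb_true_iff in Hf. destruct Hf as [H1 H2]. apply IHA in H2.
      destruct H2. rewrite H1, H; auto.
  - destruct (Nat.eqb_spec x0 x).
    + subst. simpl in Hf. split; auto. apply andb_true_iff in Hf. destruct Hf as [Hf _].
      intro; subst. rewrite Nat.eqb_refl in Hf; discriminate.
    + simpl in Hf. apply andb_true_iff in Hf. destruct Hf as [H1 H2]. apply IHA in H2.
      destruct H2. rewrite H1, H; auto.
Qed.

Lemma prefix_All x B : prefix (All x B) = (QAll, x) :: prefix B.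
Proof. reflexivity. Qed.
Lemma prefix_Ex x B : prefix (Ex x B) = (QEx, x) :: prefix B.
Proof. reflexivity. Qed.
Lemma matrix_All x B : matrix (All x B) = matrix B.
Proof. reflexivity. Qed.
Lemma matrix_Ex x B : matrix (Ex x B) = matrix B.
Proof. reflexivity. Qed.

Lemma free_not_prefix w A : free w A = true -> ~ In w (map snd (prefix A)).
Proof.
  induction A; intros Hf; try (unfold prefix; simpl; tauto).
  - rewrite prefix_All. simpl in *. apply andb_true_iff in Hf. destruct Hf as [H1 H2].
    intros [E|E]; [subst; rewrite Nat.eqb_refl in H1; discriminate| apply IHA; auto].
  - rewrite prefix_Ex. simpl in *. apply andb_true_iff in Hf. destruct Hf as [H1 H2].
    intros [E|E]; [subst; rewrite Nat.eqb_refl in H1; discriminate| apply IHA; auto].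
Qed.

Lemma subst_t_nofree x t s : tvar x s = false -> subst_t x t s = s.
Proof. destruct s; simpl; auto. intros H; rewrite H; auto. Qed.

Lemma subst_nofree x t A : free x A = false -> subst x t A = A.
Proof.
  induction A; simpl; intros Hf; auto.
  - f_equal. induction ts; simpl in *; auto. apply orb_false_iff in Hf. destruct Hf.
    rewrite subst_t_nofree, IHts; auto.
  - apply orb_false_iff in Hf. destruct Hf. rewrite !subst_t_nofree; auto.
  - apply orb_false_iff in Hf; destruct Hf; rewrite IHA1, IHA2; auto.
  - apply orb_false_iff in Hf; destruct Hf; rewrite IHA1, IHA2; auto.
  - apply orb_false_iff in Hf; destruct Hf; rewrite IHA1, IHA2; auto.
  - destruct (Nat.eqb_spec x0 x); auto. rewrite IHA; auto.
  - destruct (Nat.eqb_spec x0 x); auto. rewrite IHA; auto.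
Qed.
Lemma D_tl H A B : D H A -> D (B :: H) A.
Proof. apply D_weak, incl_tl, incl_refl. Qed.
Lemma D_hd H A : D (A :: H) A.
Proof. apply D_ax; left; auto. Qed.

Lemma bigAnd_cons A l : l <> [] -> bigAnd (A :: l) = And A (bigAnd l).
Proof. destruct l; [congruence|reflexivity]. Qed.
Lemma bigOr_cons A l : l <> [] -> bigOr (A :: l) = Or A (bigOr l).
Proof. destruct l; [congruence|reflexivity]. Qed.

Lemma Prov_bigAnd_intro G l : (forall A, In A l -> Prov G A) -> Prov G (bigAnd l).
Proof.
  induction l as [|A l IH]; intros Hl.
  - simpl. apply P_impI, P_ax; left; auto.
  - destruct l as [|B l']. + simpl. apply Hl; left; auto.
    + rewrite bigAnd_cons by congruence. apply P_andI. apply Hl; left; auto.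
      apply IH. intros; apply Hl; right; auto.
Qed.
Lemma D_bigAnd_intro H l : (forall A, In A l -> D H A) -> D H (bigAnd l).
Proof. intros Hl G HG. apply Prov_bigAnd_intro. intros A HA; apply Hl; auto. Qed.

Lemma D_bigAnd_elim H A l : In A l -> D H (bigAnd l) -> D H A.
Proof.
  induction l as [|B l IH]; intros Hi Hb; [destruct Hi|].
  destruct l as [|C l'].
  - destruct Hi as [<-|[]]. auto.
  - rewrite bigAnd_cons in Hb by congruence. destruct Hi as [<-|Hi].
    + eapply D_andE1; eauto.
    + apply IH; auto. eapply D_andE2; eauto.
Qed.

Lemma D_bigOr_intro H A l : In A l -> D H A -> D H (bigOr l).
Proof.
  induction l as [|B l IH]; intros Hi Hb; [destruct Hi|].
  destruct l as [|C l'].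
  - destruct Hi as [<-|[]]. auto.
  - rewrite bigOr_cons by congruence. destruct Hi as [<-|Hi].
    + apply D_orI1; auto.
    + apply D_orI2; auto.
Qed.

Lemma D_bigOr_elim H l C : D H (bigOr l) -> (forall A, In A l -> D (A :: H) C) -> D H C.
Proof.
  revert H. induction l as [|B l IH]; intros H Hb Hl.
  - simpl in Hb. apply D_botE; auto.
  - destruct l as [|B' l'].
    + simpl in Hb. eapply D_impE; [apply D_impI, Hl; left; auto| auto].
    + rewrite bigOr_cons in Hb by congruence. eapply D_orE; [exact Hb| apply Hl; left; auto|].
      apply IH. apply D_hd. intros A HA. eapply D_weak; [|apply Hl; right; exact HA].
      intros u [<-|Hu]; [left; auto| right; right; auto].
Qed.

Lemma D_dec_or H A B : D H (Or A (Neg A)) -> D H (Or B (Neg B)) ->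
  D H (Or (Or A B) (Neg (Or A B))).
Proof.
  intros HA HB. eapply D_orE; [exact HA| |].
  - apply D_orI1, D_orI1, D_hd.
  - eapply D_orE; [apply D_tl; exact HB| |].
    + apply D_orI1, D_orI2, D_hd.
    + apply D_orI2. unfold Neg. apply D_impI. eapply D_orE; [apply D_hd| |].
      * eapply D_impE; [do 3 apply D_tl; apply D_hd| apply D_hd].
      * eapply D_impE; [do 2 apply D_tl; apply D_hd| apply D_hd].
Qed.

Lemma D_dec_bigOr H l : (forall A, In A l -> D H (Or A (Neg A))) ->
  D H (Or (bigOr l) (Neg (bigOr l))).
Proof.
  induction l as [|B l IH]; intros Hl.
  - simpl. apply D_orI2. apply D_id.
  - destruct l as [|B' l'].
    + simpl. apply Hl; left; auto.
    + rewrite bigOr_cons by congruence. apply D_dec_or. apply Hl; left; auto.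
      apply IH; intros; apply Hl; right; auto.
Qed.

Lemma free_bigAnd y l : free y (bigAnd l) = true -> exists A, In A l /\ free y A = true.
Proof.
  induction l as [|B l IH]; intros Hf; [discriminate|].
  destruct l as [|C l'].
  - exists B; simpl; auto.
  - rewrite bigAnd_cons in Hf by congruence. simpl in Hf. apply orb_true_iff in Hf.
    destruct Hf as [Hf|Hf]; [exists B; simpl; auto|].
    destruct (IH Hf) as [A [HA HA']]. exists A; simpl; auto.
Qed.
Lemma free_bigOr y l : free y (bigOr l) = true -> exists A, In A l /\ free y A = true.
Proof.
  induction l as [|B l IH]; intros Hf; [discriminate|].
  destruct l as [|C l'].
  - exists B; simpl; auto.
  - rewrite bigOr_cons in Hf by congruence. simpl in Hf. apply orb_true_iff in Hf.
    destruct Hf as [Hf|Hf]; [exists B; simpl; auto|].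
    destruct (IH Hf) as [A [HA HA']]. exists A; simpl; auto.
Qed.

Lemma free_allN y vs A : free y (allN vs A) = true -> ~ In y vs /\ free y A = true.
Proof.
  induction vs as [|v vs IH]; simpl; intros Hf; [auto|].
  apply andb_true_iff in Hf. destruct Hf as [H1 H2]. apply IH in H2. destruct H2.
  split; auto. intros [E|E]; auto. subst. rewrite Nat.eqb_refl in H1. discriminate.
Qed.
Definition msub_t (s : nat -> term) (t : term) : term :=
  match t with Var v => s v | Cst c => Cst c end.
Fixpoint msub (s : nat -> term) (A : form) : form :=
  match A with
  | Bot => Bot
  | Atom p ts => Atom p (map (msub_t s) ts)
  | Eq a b => Eq (msub_t s a) (msub_t s b)
  | And B C => And (msub s B) (msub s C)
  | Or B C => Or (msub s B) (msub s C)
  | Imp B C => Imp (msub s B) (msub s C)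
  | All x B => All x B
  | Ex x B => Ex x B
  end.

Lemma msub_t_ext s1 s2 t : (forall v, s1 v = s2 v) -> msub_t s1 t = msub_t s2 t.
Proof. destruct t; simpl; auto. Qed.
Lemma msub_ext s1 s2 A : (forall v, s1 v = s2 v) -> msub s1 A = msub s2 A.
Proof.
  intros He. induction A; simpl; auto; try congruence.
  - f_equal. apply map_ext. intros; apply msub_t_ext; auto.
  - rewrite !(msub_t_ext s1 s2); auto.
Qed.
Lemma msub_id s A : (forall v, s v = Var v) -> msub s A = A.
Proof.
  intros He. induction A; simpl; auto; try congruence.
  - f_equal. induction ts; simpl; auto. rewrite IHts. destruct a; simpl; auto. rewrite He; auto.
  - destruct s0, t; simpl; rewrite ?He; auto.
Qed.
Lemma subst_msub x t A : qf A = true ->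
  subst x t A = msub (fun v => if v =? x then t else Var v) A.
Proof.
  induction A; simpl; intros Hq; try discriminate; auto;
  try (apply andb_true_iff in Hq; destruct Hq; rewrite IHA1, IHA2; auto).
  - f_equal. apply map_ext. destruct a; simpl; auto.
  - destruct s, t0; simpl; auto.
Qed.
Lemma msub_msub s1 s2 A : qf A = true ->
  msub s1 (msub s2 A) = msub (fun v => msub_t s1 (s2 v)) A.
Proof.
  induction A; simpl; intros Hq; try discriminate; auto;
  try (apply andb_true_iff in Hq; destruct Hq; rewrite IHA1, IHA2; auto).
  - f_equal. rewrite map_map. apply map_ext. destruct a; simpl; auto.
  - destruct s, t; simpl; auto.
Qed.
Lemma qf_subst x t A : qf A = true -> qf (subst x t A) = true.
Proof. induction A; simpl; auto; intros Hq; try discriminate;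
  apply andb_true_iff in Hq; destruct Hq; rewrite IHA1, IHA2; auto. Qed.

Lemma subst_allN x t vs A : ~ In x vs -> subst x t (allN vs A) = allN vs (subst x t A).
Proof.
  induction vs as [|v vs IH]; simpl; intros Hn; auto.
  destruct (Nat.eqb_spec v x); [exfalso; apply Hn; auto|]. rewrite IH; auto.
Qed.
Lemma free_for_allN t x vs A : qf A = true -> (forall u, In u vs -> t <> Var u) ->
  free_for t x (allN vs A) = true.
Proof.
  induction vs as [|v vs IH]; simpl; intros Hq Hu; [apply free_for_qf; auto|].
  rewrite IH; auto. destruct t; simpl.
  - destruct (Nat.eqb_spec v0 v); subst. exfalso; eapply Hu; eauto. simpl. apply orb_true_r.
  - apply orb_true_r.
Qed.

Lemma allN_inst vs : NoDup vs -> forall body s, qf body = true ->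
  (forall v u, In v vs -> s v = Var u -> ~ In u vs) ->
  (forall u, ~ In u vs -> s u = Var u) ->
  forall H, D H (allN vs body) -> D H (msub s body).
Proof.
  induction vs as [|v vs IH]; intros Hnd body s Hq H1 H2 H HD.
  - rewrite msub_id; auto.
  - inversion Hnd as [|? ? Hv Hnd']; subst.
    simpl in HD. apply D_allE with (t := s v) in HD.
    2:{ apply free_for_allN; auto. intros u Hu E. eapply H1; [left; eauto| exact E| right; auto]. }
    rewrite subst_allN in HD by auto.
    set (s' := fun u => if in_dec Nat.eq_dec u vs then s u else Var u).
    apply (IH Hnd' _ s') in HD.
    + rewrite subst_msub, msub_msub in HD by auto.
      erewrite msub_ext; [exact HD|]. intros u. unfold s'. simpl.
      destruct (Nat.eqb_spec u v).
      * subst. destruct (s v) eqn:E; simpl; auto.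
        destruct (in_dec Nat.eq_dec v0 vs); auto. exfalso; eapply H1; [left; eauto|exact E|right; auto].
      * simpl. destruct (in_dec Nat.eq_dec u vs); auto. rewrite H2; auto.
        intros [E|E]; auto.
    + apply qf_subst; auto.
    + intros w u Hw E. unfold s' in E. destruct (in_dec Nat.eq_dec w vs); [|contradiction].
      intros Hu. apply (H1 w u); [right; auto| exact E| right; auto].
    + intros u Hu. unfold s'. destruct (in_dec Nat.eq_dec u vs); auto; contradiction.
Qed.
Definition inx (cs : list nat) (x : nat) : form :=
  bigOr (map (fun c => Eq (Var x) (Cst c)) cs).
Definition in_ct (cs : list nat) (ts : list term) : form :=
  bigAnd (map (fun t => bigOr (map (fun c => Eq t (Cst c)) cs)) ts).
Definition sppb (cs : list nat) (p : nat) (vs : list nat) : form :=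
  Imp (Atom p (map Var vs)) (in_ct cs (map Var vs)).
Definition SPP2 (cs : list nat) (F : form) (N : nat) : form :=
  bigAnd (map (fun pn => allN (seq N (snd pn)) (sppb cs (fst pn) (seq N (snd pn)))) (preds F)).

Lemma in_c_eq cs vs : in_c cs vs = in_ct cs (map Var vs).
Proof. unfold in_c, in_ct. rewrite map_map. reflexivity. Qed.

Lemma msub_bigAnd s l : msub s (bigAnd l) = bigAnd (map (msub s) l).
Proof.
  induction l as [|A l IH]; [reflexivity|]. destruct l as [|B l']; [reflexivity|].
  rewrite bigAnd_cons by congruence. simpl map. rewrite (bigAnd_cons (msub s A)) by (simpl; congruence).
  cbn [msub]. rewrite IH. reflexivity.
Qed.
Lemma msub_bigOr s l : msub s (bigOr l) = bigOr (map (msub s) l).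
Proof.
  induction l as [|A l IH]; [reflexivity|]. destruct l as [|B l']; [reflexivity|].
  rewrite bigOr_cons by congruence. simpl map. rewrite (bigOr_cons (msub s A)) by (simpl; congruence).
  cbn [msub]. rewrite IH. reflexivity.
Qed.
Lemma msub_in_ct s cs ts : msub s (in_ct cs ts) = in_ct cs (map (msub_t s) ts).
Proof.
  unfold in_ct. rewrite msub_bigAnd, !map_map. f_equal. apply map_ext. intros t.
  rewrite msub_bigOr, map_map. reflexivity.
Qed.

Lemma qf_bigAnd l : (forall A, In A l -> qf A = true) -> qf (bigAnd l) = true.
Proof.
  induction l as [|A l IH]; intros Hl; [reflexivity|]. destruct l as [|B l'].
  - apply Hl; left; auto.
  - rewrite bigAnd_cons by congruence. cbn [qf]. rewrite Hl, IH; auto. intros; apply Hl; right; auto.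
    left; auto.
Qed.
Lemma qf_bigOr l : (forall A, In A l -> qf A = true) -> qf (bigOr l) = true.
Proof.
  induction l as [|A l IH]; intros Hl; [reflexivity|]. destruct l as [|B l'].
  - apply Hl; left; auto.
  - rewrite bigOr_cons by congruence. cbn [qf]. rewrite Hl, IH; auto. intros; apply Hl; right; auto.
    left; auto.
Qed.
Lemma qf_in_ct cs ts : qf (in_ct cs ts) = true.
Proof.
  apply qf_bigAnd. intros A HA. apply in_map_iff in HA. destruct HA as [t [<- _]].
  apply qf_bigOr. intros B HB. apply in_map_iff in HB. destruct HB as [c [<- _]]. reflexivity.
Qed.

Definition maxt (t : term) : nat := match t with Var v => v | Cst _ => 0 end.
Fixpoint maxv (A : form) : nat :=
  match A with
  | Bot => 0
  | Atom p ts => max (length ts) (list_max (map maxt ts))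
  | Eq s t => max (maxt s) (maxt t)
  | And B C | Or B C | Imp B C => max (maxv B) (maxv C)
  | All x B | Ex x B => max x (maxv B)
  end.

Lemma preds_le p n A : In (p, n) (preds A) -> n <= maxv A.
Proof.
  induction A; simpl; intros Hi; try tauto; try (apply in_app_or in Hi; destruct Hi as [Hi|Hi];
    [apply IHA1 in Hi| apply IHA2 in Hi]; lia).
  - destruct Hi as [E|[]]. inversion E; subst. lia.
  - apply IHA in Hi; lia.
  - apply IHA in Hi; lia.
Qed.

Lemma map_sig_seq N ts (sg : nat -> term) :
  (forall i, i < length ts -> sg (N + i) = nth i ts (Cst 0)) ->
  map sg (seq N (length ts)) = ts.
Proof.
  intros Hs. apply nth_ext with (d := sg 0) (d' := Cst 0).
  - rewrite length_map, length_seq; auto.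
  - intros n Hn. rewrite length_map, length_seq in Hn. rewrite map_nth, seq_nth; auto.
Qed.

Lemma key_atom cs F N x p ts H :
  In (SPP2 cs F N) H -> In (Neg (inx cs x)) H -> In (p, length ts) (preds F) ->
  (forall v, In (Var v) ts -> v < N) -> In (Var x) ts -> D H (Imp (Atom p ts) Bot).
Proof.
  intros HS HN Hp Hv Hx.
  set (n := length ts).
  assert (HA : D H (allN (seq N n) (sppb cs p (seq N n)))).
  { eapply D_bigAnd_elim; [| apply D_ax; exact HS].
    apply in_map_iff. exists (p, n). split; auto. }
  set (sg := fun v => if (N <=? v) && (v <? N + n) then nth (v - N) ts (Cst 0) else Var v).
  apply (allN_inst _ (seq_NoDup n N) _ sg) in HA.
  - unfold sppb in HA. simpl in HA. rewrite msub_in_ct, !map_map in HA. simpl in HA.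
    assert (E : map sg (seq N n) = ts).
    { apply map_sig_seq. intros i Hi. unfold sg.
      replace ((N <=? N + i) && (N + i <? N + n)) with true.
      f_equal; lia. symmetry. apply andb_true_iff; split; [apply Nat.leb_le|apply Nat.ltb_lt]; lia. }
    assert (E' : map (fun v => sg v) (seq N n) = ts) by exact E.
    rewrite E' in HA. apply D_impI. eapply D_impE; [apply D_tl, D_ax; exact HN|].
    eapply D_bigAnd_elim; [| eapply D_impE; [apply D_tl; exact HA| apply D_hd]].
    apply in_map_iff. exists (Var x). split; auto.
  - unfold sppb. simpl. apply qf_in_ct.
  - intros v u Hvi E Hu. apply in_seq in Hvi, Hu. unfold sg in E.
    replace ((N <=? v) && (v <? N + n)) with true in E.
    + assert (Hin : In (Var u) ts). { rewrite <- E. apply nth_In. unfold n in Hvi. lia. }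
      apply Hv in Hin. lia.
    + symmetry. apply andb_true_iff; split; [apply Nat.leb_le|apply Nat.ltb_lt]; lia.
  - intros u Hu. unfold sg. destruct ((N <=? u) && (u <? N + n)) eqn:E; auto.
    exfalso. apply Hu, in_seq. apply andb_true_iff in E. destruct E as [E1 E2].
    apply Nat.leb_le in E1. apply Nat.ltb_lt in E2. lia.
Qed.
Lemma D_top H : D H Top.
Proof. apply D_impI, D_hd. Qed.

Lemma cong_and H A A' B B' : D H (Imp A A') -> D H (Imp B B') -> D H (Imp (And A B) (And A' B')).
Proof.
  intros H1 H2. apply D_impI. apply D_andI.
  - eapply D_impE; [apply D_tl; exact H1| eapply D_andE1; apply D_hd].
  - eapply D_impE; [apply D_tl; exact H2| eapply D_andE2; apply D_hd].
Qed.
Lemma cong_or H A A' B B' : D H (Imp A A') -> D H (Imp B B') -> D H (Imp (Or A B) (Or A' B')).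
Proof.
  intros H1 H2. apply D_impI. eapply D_orE; [apply D_hd| |].
  - apply D_orI1. eapply D_impE; [do 2 apply D_tl; exact H1| apply D_hd].
  - apply D_orI2. eapply D_impE; [do 2 apply D_tl; exact H2| apply D_hd].
Qed.
Lemma cong_imp H A A' B B' : D H (Imp A' A) -> D H (Imp B B') -> D H (Imp (Imp A B) (Imp A' B')).
Proof.
  intros H1 H2. apply D_impI, D_impI. eapply D_impE; [do 2 apply D_tl; exact H2|].
  eapply D_impE; [apply D_tl; apply D_hd|]. eapply D_impE; [do 2 apply D_tl; exact H1| apply D_hd].
Qed.

Lemma is_bot_true A : is_bot A = true -> A = Bot.
Proof. destruct A; simpl; congruence. Qed.
Lemma is_top_true A : is_top A = true -> A = Top.
Proof. destruct A; simpl; try congruence. destruct A1; try congruence; destruct A2; try congruence; reflexivity. Qed.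

Definition EQV H A B := D H (Imp A B) /\ D H (Imp B A).

Lemma EQV_trans H A B C : EQV H A B -> EQV H B C -> EQV H A C.
Proof. intros [H1 H2] [H3 H4]; split; eapply D_trans; eauto. Qed.
Lemma EQV_refl H A : EQV H A A.
Proof. split; apply D_id. Qed.

Lemma simp_and_eqv H A B : EQV H (And A B) (simp_and A B).
Proof.
  unfold simp_and. destruct (is_bot A) eqn:Ea; simpl.
  - apply is_bot_true in Ea; subst. split; apply D_impI.
    + eapply D_andE1; apply D_hd.
    + apply D_botE, D_hd.
  - destruct (is_bot B) eqn:Eb; simpl.
    + apply is_bot_true in Eb; subst. split; apply D_impI.
      * eapply D_andE2; apply D_hd.
      * apply D_botE, D_hd.
    + destruct (is_top A) eqn:Ta.
      * apply is_top_true in Ta; subst. split; apply D_impI.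
        -- eapply D_andE2; apply D_hd.
        -- apply D_andI; [apply D_top| apply D_hd].
      * destruct (is_top B) eqn:Tb; [|apply EQV_refl].
        apply is_top_true in Tb; subst. split; apply D_impI.
        -- eapply D_andE1; apply D_hd.
        -- apply D_andI; [apply D_hd| apply D_top].
Qed.

Lemma simp_or_eqv H A B : EQV H (Or A B) (simp_or A B).
Proof.
  unfold simp_or. destruct (is_bot A) eqn:Ea.
  - apply is_bot_true in Ea; subst. split; apply D_impI.
    + eapply D_orE; [apply D_hd| apply D_botE, D_hd| apply D_hd].
    + apply D_orI2, D_hd.
  - destruct (is_bot B) eqn:Eb.
    + apply is_bot_true in Eb; subst. split; apply D_impI.
      * eapply D_orE; [apply D_hd| apply D_hd| apply D_botE, D_hd].
      * apply D_orI1, D_hd.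
    + destruct (is_top A) eqn:Ta; simpl.
      * apply is_top_true in Ta; subst. split; apply D_impI; [apply D_top| apply D_orI1, D_top].
      * destruct (is_top B) eqn:Tb; [|apply EQV_refl].
        apply is_top_true in Tb; subst. split; apply D_impI; [apply D_top| apply D_orI2, D_top].
Qed.

Lemma simp_imp_eqv H A B : EQV H (Imp A B) (simp_imp A B).
Proof.
  unfold simp_imp. destruct (is_bot A) eqn:Ea.
  - apply is_bot_true in Ea; subst. split; apply D_impI; [apply D_top| apply D_impI, D_botE, D_hd].
  - destruct (is_top B) eqn:Tb.
    + apply is_top_true in Tb; subst. split; apply D_impI; [apply D_top| apply D_impI, D_top].
    + destruct (is_top A) eqn:Ta; [|apply EQV_refl].
      apply is_top_true in Ta; subst. split; apply D_impI.
      * eapply D_impE; [apply D_hd| apply D_top].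
      * apply D_impI. apply D_tl, D_hd.
Qed.

Lemma simp_eqv T : forall H, EQV H T (simp T).
Proof.
  induction T; intros H; simpl; try apply EQV_refl.
  - eapply EQV_trans; [|apply simp_and_eqv].
    destruct (IHT1 H), (IHT2 H); split; apply cong_and; auto.
  - eapply EQV_trans; [|apply simp_or_eqv].
    destruct (IHT1 H), (IHT2 H); split; apply cong_or; auto.
  - eapply EQV_trans; [|apply simp_imp_eqv].
    destruct (IHT1 H), (IHT2 H); split; apply cong_imp; auto.
Qed.

Lemma sym_cv H d x : D H (Eq (Cst d) (Var x)) -> D H (Eq (Var x) (Cst d)).
Proof.
  intros HE. assert (E1 : subst x (Var x) (Eq (Var x) (Cst d)) = Eq (Var x) (Cst d))
    by apply subst_id.
  rewrite <- E1. apply D_eqE with (s := Cst d); auto.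
  simpl. rewrite Nat.eqb_refl. apply D_eqR.
Qed.
Lemma sym_vc H d x : D H (Eq (Var x) (Cst d)) -> D H (Eq (Cst d) (Var x)).
Proof.
  intros HE. assert (E1 : subst (S x) (Cst d) (Eq (Var (S x)) (Var x)) = Eq (Cst d) (Var x)).
  { simpl. rewrite Nat.eqb_refl. destruct (Nat.eqb_spec x (S x)); [lia|auto]. }
  rewrite <- E1. apply D_eqE with (s := Var x); auto.
  simpl. rewrite Nat.eqb_refl. destruct (Nat.eqb_spec x (S x)); [lia|]. apply D_eqR.
Qed.

Lemma tvar_true y t : tvar y t = true -> t = Var y.
Proof. destruct t; simpl; try discriminate. intros E; apply Nat.eqb_eq in E; subst; auto. Qed.
Lemma tcst_self d : tcst d (Cst d) = true.
Proof. simpl. apply Nat.eqb_refl. Qed.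

Lemma in_list_max k l : In k l -> k <= list_max l.
Proof.
  intros Hk. assert (Hf := proj1 (list_max_le l (list_max l)) (le_n _)).
  rewrite Forall_forall in Hf. auto.
Qed.

Section Key.
Variables (cs : list nat) (F : form) (N x : nat).

Definition conds (S : form) : Prop :=
  (forall pn, In pn (preds S) -> In pn (preds F)) /\
  (forall c, occ_cst c S = true -> In c cs) /\ maxv S < N.

Lemma conds_l S1 S2 : (forall pn, In pn (preds S1 ++ preds S2) -> In pn (preds F)) /\
  (forall c, occ_cst c S1 || occ_cst c S2 = true -> In c cs) /\ max (maxv S1) (maxv S2) < N ->
  conds S1 /\ conds S2.
Proof.
  intros [H1 [H2 H3]]. split; split; [|split| |split]; try lia;
  try (intros; apply H1, in_or_app; auto); intros c Hc; apply H2; rewrite Hc; auto with bool.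
Qed.

Lemma refute_eq H d : In (Neg (inx cs x)) H -> In d cs -> D H (Imp (Eq (Var x) (Cst d)) Bot).
Proof.
  intros HN Hd. apply D_impI. eapply D_impE; [apply D_tl, D_ax; exact HN|].
  unfold inx. eapply D_bigOr_intro; [|apply D_hd]. apply in_map_iff. eauto.
Qed.

Lemma kill_eqv S : qf S = true -> conds S -> forall H, In (SPP2 cs F N) H ->
  In (Neg (inx cs x)) H -> EQV H S (kill x S).
Proof.
  induction S; simpl; intros Hq Hc H HS HN; try discriminate; try apply EQV_refl.
  - destruct (existsb (tvar x) ts) eqn:E; [|apply EQV_refl].
    split; [|apply D_impI, D_botE, D_hd].
    destruct Hc as [H1 [H2 H3]]. simpl in H3.
    apply (key_atom cs F N x); auto.
    + apply H1. left; auto.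
    + intros v Hv. assert (v <= list_max (map maxt ts)); [|lia].
      apply in_list_max. apply in_map_iff. exists (Var v); auto.
    + destruct (existsb_exists (tvar x) ts) as [Hx _]. destruct (Hx E) as [t [Ht Ht']].
      apply tvar_true in Ht'. subst; auto.
  - destruct Hc as [H1 [H2 H3]].
    destruct s as [a|a], t as [b|b]; simpl in *; try apply EQV_refl.
    + destruct (Nat.eqb_spec a x); [subst|apply EQV_refl].
      split; [|apply D_impI, D_botE, D_hd]. apply refute_eq; auto.
      apply H2. simpl. rewrite Nat.eqb_refl. auto.
    + destruct (Nat.eqb_spec b x); [subst|apply EQV_refl].
      split; [|apply D_impI, D_botE, D_hd]. apply D_impI.
      eapply D_impE; [apply D_tl, refute_eq; auto| apply sym_cv, D_hd].
      apply H2. rewrite Nat.eqb_refl. auto.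
  - apply andb_true_iff in Hq. destruct Hq as [Q1 Q2].
    unfold conds in Hc. simpl in Hc. apply conds_l in Hc. destruct Hc as [C1 C2].
    destruct (IHS1 Q1 C1 H HS HN), (IHS2 Q2 C2 H HS HN). split; apply cong_and; auto.
  - apply andb_true_iff in Hq. destruct Hq as [Q1 Q2].
    unfold conds in Hc. simpl in Hc. apply conds_l in Hc. destruct Hc as [C1 C2].
    destruct (IHS1 Q1 C1 H HS HN), (IHS2 Q2 C2 H HS HN). split; apply cong_or; auto.
  - apply andb_true_iff in Hq. destruct Hq as [Q1 Q2].
    unfold conds in Hc. simpl in Hc. apply conds_l in Hc. destruct Hc as [C1 C2].
    destruct (IHS1 Q1 C1 H HS HN), (IHS2 Q2 C2 H HS HN). split; apply cong_imp; auto.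
Qed.

Lemma key_pwr S : qf S = true -> conds S -> forall H, In (SPP2 cs F N) H ->
  In (Neg (inx cs x)) H -> pwr x S = true -> D H S.
Proof.
  intros Hq Hc H HS HN Hp. unfold pwr in Hp. apply is_top_true in Hp.
  destruct (kill_eqv S Hq Hc H HS HN) as [_ K2]. destruct (simp_eqv (kill x S) H) as [_ S2].
  rewrite Hp in S2. eapply D_impE; [exact K2|]. eapply D_impE; [exact S2| apply D_top].
Qed.

Lemma key_nwr S : qf S = true -> conds S -> forall H, In (SPP2 cs F N) H ->
  In (Neg (inx cs x)) H -> nwr x S = true -> D H (Neg S).
Proof.
  intros Hq Hc H HS HN Hp. unfold nwr in Hp. apply is_bot_true in Hp.
  destruct (kill_eqv S Hq Hc H HS HN) as [K1 _]. destruct (simp_eqv (kill x S) H) as [S1 _].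
  rewrite Hp in S1. unfold Neg. eapply D_trans; eauto.
Qed.
End Key.
Definition upd (q : quant) (pos : bool) : bool :=
  match q with QAll => pos | QEx => negb pos end.
Definition dimp (u : bool) (A B : form) : form := if u then Imp A B else Imp B A.

Lemma good_case q x pos S : good q x pos S = true ->
  (upd q pos = true /\ pwr x S = true) \/ (upd q pos = false /\ nwr x S = true).
Proof. unfold good. destruct q, pos, (pwr x S), (nwr x S); simpl; auto; discriminate. Qed.

Lemma sv_and q y pos A B : sv q y pos (And A B) = good q y pos (And A B) || (sv q y pos A && sv q y pos B).
Proof. reflexivity. Qed.
Lemma sv_or q y pos A B : sv q y pos (Or A B) = good q y pos (Or A B) || (sv q y pos A && sv q y pos B).
Proof. reflexivity. Qed.
Lemma sv_imp q y pos A B : sv q y pos (Imp A B) = good q y pos (Imp A B) || (sv q y (negb pos) A && sv q y pos B).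
Proof. reflexivity. Qed.
Lemma sv_atom q y pos p ts : sv q y pos (Atom p ts) = good q y pos (Atom p ts) || negb (free y (Atom p ts)).
Proof. reflexivity. Qed.
Lemma sv_eq q y pos s t : sv q y pos (Eq s t) = good q y pos (Eq s t) || negb (free y (Eq s t)).
Proof. reflexivity. Qed.

Lemma upd_neg q pos : upd q (negb pos) = negb (upd q pos).
Proof. destruct q; reflexivity. Qed.

Section MM.
Variables (cs : list nat) (F : form) (N x c : nat).

Lemma good_res q pos S H : good q x pos S = true -> qf S = true -> conds cs F N S ->
  In (SPP2 cs F N) H -> In (Neg (inx cs x)) H ->
  D H (dimp (upd q pos) (subst x (Cst c) S) S).
Proof.
  intros Hg Hq Hc HS HN. destruct (good_case _ _ _ _ Hg) as [[U P]|[U P]]; rewrite U; simpl.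
  - apply D_impI, D_tl. eapply key_pwr; eauto.
  - apply D_impI, D_botE. eapply D_impE; [apply D_tl; eapply key_nwr; eauto| apply D_hd].
Qed.

Lemma MM q S : qf S = true -> conds cs F N S -> forall pos, sv q x pos S = true ->
  forall H, In (SPP2 cs F N) H -> In (Neg (inx cs x)) H ->
  D H (dimp (upd q pos) (subst x (Cst c) S) S).
Proof.
  induction S; intros Hq Hc pos Hsv H HS HN; try discriminate.
  - simpl. destruct (upd q pos); apply D_id.
  - destruct (good q x pos (Atom p ts)) eqn:Hg; [apply good_res; auto|].
    rewrite sv_atom, Hg in Hsv. simpl in Hsv. apply negb_true_iff in Hsv.
    rewrite subst_nofree by auto. destruct (upd q pos); apply D_id.
  - destruct (good q x pos (Eq s t)) eqn:Hg; [apply good_res; auto|].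
    rewrite sv_eq, Hg in Hsv. simpl in Hsv. apply negb_true_iff in Hsv.
    rewrite subst_nofree by auto. destruct (upd q pos); apply D_id.
  - destruct (good q x pos (And S1 S2)) eqn:Hg; [apply good_res; auto|].
    rewrite sv_and, Hg in Hsv. simpl in Hsv. apply andb_true_iff in Hsv. destruct Hsv as [V1 V2].
    simpl in Hq. apply andb_true_iff in Hq. destruct Hq as [Q1 Q2].
    unfold conds in Hc. simpl in Hc. apply conds_l in Hc. destruct Hc as [C1 C2].
    specialize (IHS1 Q1 C1 pos V1 H HS HN). specialize (IHS2 Q2 C2 pos V2 H HS HN).
    simpl. destruct (upd q pos); apply cong_and; auto.
  - destruct (good q x pos (Or S1 S2)) eqn:Hg; [apply good_res; auto|].
    rewrite sv_or, Hg in Hsv. simpl in Hsv. apply andb_true_iff in Hsv. destruct Hsv as [V1 V2].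
    simpl in Hq. apply andb_true_iff in Hq. destruct Hq as [Q1 Q2].
    unfold conds in Hc. simpl in Hc. apply conds_l in Hc. destruct Hc as [C1 C2].
    specialize (IHS1 Q1 C1 pos V1 H HS HN). specialize (IHS2 Q2 C2 pos V2 H HS HN).
    simpl. destruct (upd q pos); apply cong_or; auto.
  - destruct (good q x pos (Imp S1 S2)) eqn:Hg; [apply good_res; auto|].
    rewrite sv_imp, Hg in Hsv. simpl in Hsv. apply andb_true_iff in Hsv. destruct Hsv as [V1 V2].
    simpl in Hq. apply andb_true_iff in Hq. destruct Hq as [Q1 Q2].
    unfold conds in Hc. simpl in Hc. apply conds_l in Hc. destruct Hc as [C1 C2].
    specialize (IHS1 Q1 C1 (negb pos) V1 H HS HN). specialize (IHS2 Q2 C2 pos V2 H HS HN).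
    rewrite upd_neg in IHS1.
    simpl. destruct (upd q pos); simpl in IHS1; apply cong_imp; auto.
Qed.
End MM.
Definition inv (G : list form) (B : form) : Prop :=
  forall C z, In C G -> free z C = true -> ~ In z (map snd (prefix B)).

Lemma conds_q cs F N z B : max z (maxv B) < N ->
  (forall pn, In pn (preds B) -> In pn (preds F)) -> (forall c, occ_cst c B = true -> In c cs) ->
  conds cs F N B.
Proof. intros; repeat split; auto; lia. Qed.

Lemma inv_step G B z B' Bn : (forall w, free w Bn = true -> ~ In w (map snd (prefix B'))) ->
  inv G B -> map snd (prefix B) = z :: map snd (prefix B') -> inv (Bn :: G) B'.
Proof.
  intros Hn Hi E C w [<-|HC] Hf; auto. intros Hw. apply (Hi C w HC Hf). rewrite E. right; auto.
Qed.

Lemma notfree_G G B z : inv G B -> map snd (prefix B) = z :: map snd (prefix B) -> True.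
Proof. auto. Qed.

Lemma free_q_sub w z B' c x : (free w (All z (subst x (Cst c) B')) = true \/
  free w (Ex z (subst x (Cst c) B')) = true \/ free w (All z B') = true \/ free w (Ex z B') = true) ->
  free w B' = true.
Proof.
  simpl. intros [H|[H|[H|H]]]; apply andb_true_iff in H; destruct H as [_ H]; auto;
  apply free_subst_cst in H; tauto.
Qed.

Lemma bound_self z A : free z (All z A) = false /\ free z (Ex z A) = false.
Proof. simpl. rewrite Nat.eqb_refl. auto. Qed.

Section ML.
Variables (cs : list nat) (F : form) (N x c : nat) (q : quant).

Lemma ML B : qf (matrix B) = true -> ~ In x (map snd (prefix B)) -> sv q x true (matrix B) = true ->
  conds cs F N B -> forall G, inv G B -> In (SPP2 cs F N) G -> In (Neg (inx cs x)) G ->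
  Prov G (dimp (upd q true) (subst x (Cst c) B) B).
Proof.
  induction B; intros Hq Hx Hsv Hc G Hi HS HN;
  try (lazymatch goal with |- Prov _ (dimp _ _ ?S) =>
       refine (MM cs F N x c q S Hq Hc true Hsv G HS HN G (incl_refl _)) end; fail).
  -
    rename x0 into z. assert (Hz : z <> x) by (intro; subst; apply Hx; left; auto).
    simpl. destruct (Nat.eqb_spec z x); [contradiction|].
    destruct Hc as [C1 [C2 C3]]. simpl in C3.
    assert (Hc' : conds cs F N B) by (apply (conds_q cs F N z); auto).
    assert (Hx' : ~ In x (map snd (prefix B))) by (intro; apply Hx; right; auto).
    destruct (upd q true) eqn:U; simpl.
    + apply P_impI. apply P_allI with (y := z); [apply free_for_self| |apply bound_self|].
      * intros C [<-|HC]; [apply bound_self|].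
        destruct (free z C) eqn:E; auto. exfalso; apply (Hi C z HC E); left; auto.
      * rewrite subst_id. eapply P_impE.
        -- assert (IH := IHB Hq Hx' Hsv Hc' (All z (subst x (Cst c) B) :: G)).
           try rewrite U in IH; simpl in IH. apply IH; [|right; auto|right; auto].
           apply (inv_step G (All z B) z); auto. intros w Hw. apply free_not_prefix.
           apply (free_q_sub w z B c x). auto.
        -- assert (A1 := P_allE _ _ (Var z) _ (free_for_self z _) (P_ax (All z (subst x (Cst c) B) :: G) _ (or_introl eq_refl))).
           rewrite subst_id in A1. exact A1.
    + apply P_impI. apply P_allI with (y := z); [apply free_for_self| |apply bound_self|].
      * intros C [<-|HC]; [apply bound_self|].
        destruct (free z C) eqn:E; auto. exfalso; apply (Hi C z HC E); left; auto.
      * rewrite subst_id. eapply P_impE.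
        -- assert (IH := IHB Hq Hx' Hsv Hc' (All z B :: G)).
           try rewrite U in IH; simpl in IH. apply IH; [|right; auto|right; auto].
           apply (inv_step G (All z B) z); auto. intros w Hw. apply free_not_prefix.
           apply (free_q_sub w z B c x). auto.
        -- assert (A1 := P_allE _ _ (Var z) _ (free_for_self z _) (P_ax (All z B :: G) _ (or_introl eq_refl))).
           rewrite subst_id in A1. exact A1.
  -
    rename x0 into z. assert (Hz : z <> x) by (intro; subst; apply Hx; left; auto).
    simpl. destruct (Nat.eqb_spec z x); [contradiction|].
    destruct Hc as [C1 [C2 C3]]. simpl in C3.
    assert (Hc' : conds cs F N B) by (apply (conds_q cs F N z); auto).
    assert (Hx' : ~ In x (map snd (prefix B))) by (intro; apply Hx; right; auto).
    destruct (upd q true) eqn:U; simpl.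
    + apply P_impI. eapply P_exE with (y := z) (A := subst x (Cst c) B) (x := z);
        [apply free_for_self| | apply bound_self| apply bound_self| apply P_ax; left; auto|].
      * intros C [<-|HC]; [apply bound_self|].
        destruct (free z C) eqn:E; auto. exfalso; apply (Hi C z HC E); left; auto.
      * rewrite subst_id. apply P_exI with (t := Var z); [apply free_for_self|]. rewrite subst_id.
        eapply P_impE; [|apply P_ax; left; auto].
        assert (IH := IHB Hq Hx' Hsv Hc' (subst x (Cst c) B :: Ex z (subst x (Cst c) B) :: G)).
        try rewrite U in IH; simpl in IH. apply IH; [|right; right; auto|right; right; auto].
        intros C w [<-|[<-|HC]] Hf.
        -- apply free_not_prefix. apply free_subst_cst in Hf. tauto.
        -- apply free_not_prefix. apply (free_q_sub w z B c x). auto.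
        -- intros Hw. apply (Hi C w HC Hf). right; auto.
    + apply P_impI. eapply P_exE with (y := z) (A := B) (x := z);
        [apply free_for_self| | apply bound_self| apply bound_self| apply P_ax; left; auto|].
      * intros C [<-|HC]; [apply bound_self|].
        destruct (free z C) eqn:E; auto. exfalso; apply (Hi C z HC E); left; auto.
      * rewrite subst_id. apply P_exI with (t := Var z); [apply free_for_self|]. rewrite subst_id.
        eapply P_impE; [|apply P_ax; left; auto].
        assert (IH := IHB Hq Hx' Hsv Hc' (B :: Ex z B :: G)).
        try rewrite U in IH; simpl in IH. apply IH; [|right; right; auto|right; right; auto].
        intros C w [<-|[<-|HC]] Hf.
        -- apply free_not_prefix. auto.
        -- apply free_not_prefix. apply (free_q_sub w z B c x). auto.
        -- intros Hw. apply (Hi C w HC Hf). right; auto.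
Qed.
End ML.
Definition closedG (G : list form) : Prop := forall C y, In C G -> free y C = false.

Lemma free_in_ct y cs vs : free y (in_ct cs (map Var vs)) = true -> In y vs.
Proof.
  unfold in_ct. rewrite map_map. intros Hf. apply free_bigAnd in Hf.
  destruct Hf as [A [HA Hf]]. apply in_map_iff in HA. destruct HA as [v [<- Hv]].
  apply free_bigOr in Hf. destruct Hf as [B [HB Hf]]. apply in_map_iff in HB.
  destruct HB as [c [<- _]]. simpl in Hf. rewrite orb_false_r in Hf.
  apply Nat.eqb_eq in Hf. subst; auto.
Qed.

Lemma free_sppb y cs p vs : free y (sppb cs p vs) = true -> In y vs.
Proof.
  unfold sppb. simpl. intros Hf. apply orb_true_iff in Hf. destruct Hf as [Hf|Hf].
  - apply existsb_exists in Hf. destruct Hf as [t [Ht Hy]]. apply in_map_iff in Ht.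
    destruct Ht as [v [<- Hv]]. simpl in Hy. apply Nat.eqb_eq in Hy; subst; auto.
  - eapply free_in_ct; eauto.
Qed.

Lemma closed_SPP y cs F : free y (SPP cs F) = false.
Proof.
  destruct (free y (SPP cs F)) eqn:E; auto. exfalso.
  apply free_bigAnd in E. destruct E as [A [HA Hf]]. apply in_map_iff in HA.
  destruct HA as [pn [<- _]]. apply free_allN in Hf. destruct Hf as [H1 H2].
  apply H1. rewrite in_c_eq in H2. apply (free_sppb y cs (fst pn)). exact H2.
Qed.

Lemma closed_SPP2 y cs F N : free y (SPP2 cs F N) = false.
Proof.
  destruct (free y (SPP2 cs F N)) eqn:E; auto. exfalso.
  apply free_bigAnd in E. destruct E as [A [HA Hf]]. apply in_map_iff in HA.
  destruct HA as [pn [<- _]]. apply free_allN in Hf. destruct Hf as [H1 H2].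
  apply H1. eapply free_sppb; eauto.
Qed.

Lemma free_inx y cs x : free y (inx cs x) = true -> y = x.
Proof.
  unfold inx. intros Hf. apply free_bigOr in Hf. destruct Hf as [B [HB Hf]].
  apply in_map_iff in HB. destruct HB as [c [<- _]]. simpl in Hf. rewrite orb_false_r in Hf.
  apply Nat.eqb_eq in Hf; auto.
Qed.

Lemma allN_intro_closed G ws A : closedG G -> Prov G A -> Prov G (allN ws A).
Proof.
  intros Hc HA. induction ws as [|w ws IH]; simpl; auto.
  apply P_allI with (y := w); [apply free_for_self| intros; apply Hc; auto| apply bound_self|].
  rewrite subst_id; auto.
Qed.

Lemma map_sig1 N n k m : k + m <= n ->
  map (fun v => if v <? n then Var (N + v) else Var v) (seq k m) = map Var (seq (N + k) m).
Proof.
  revert k. induction m as [|m IH]; intros k Hk; simpl; auto.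
  destruct (Nat.ltb_spec k n); [|lia]. f_equal. replace (S (N + k)) with (N + S k) by lia.
  apply IH; lia.
Qed.

Lemma derive_SPP2 cs F N G : closedG G -> In (SPP cs F) G -> maxv F < N -> Prov G (SPP2 cs F N).
Proof.
  intros Hc HS HN. apply Prov_bigAnd_intro. intros A HA. apply in_map_iff in HA.
  destruct HA as [[p n] [<- Hp]]. simpl. apply allN_intro_closed; auto.
  assert (Hn : n <= maxv F) by (eapply preds_le; eauto).
  assert (H0 : D G (allN (seq 0 n) (Imp (Atom p (map Var (seq 0 n))) (in_c cs (seq 0 n))))).
  { eapply D_bigAnd_elim; [|apply D_ax; exact HS]. apply in_map_iff. exists (p, n); auto. }
  set (sg := fun v => if v <? n then Var (N + v) else Var v).
  apply (allN_inst _ (seq_NoDup n 0) _ sg) in H0.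
  - simpl in H0. rewrite in_c_eq, msub_in_ct, !map_map in H0. simpl in H0.
    assert (E : map (fun v => sg v) (seq 0 n) = map Var (seq N n)).
    { unfold sg. rewrite map_sig1 by lia. f_equal. f_equal. lia. }
    rewrite E in H0. apply H0. apply incl_refl.
  - simpl. rewrite in_c_eq. apply qf_in_ct.
  - intros v u Hv E Hu. apply in_seq in Hv, Hu. unfold sg in E.
    destruct (Nat.ltb_spec v n); [|lia]. inversion E. lia.
  - intros u Hu. unfold sg. destruct (Nat.ltb_spec u n); auto. exfalso; apply Hu, in_seq; lia.
Qed.

Lemma D_dec_inx H cs x : D H (Or (inx cs x) (Neg (inx cs x))).
Proof.
  apply D_dec_bigOr. intros A HA. apply in_map_iff in HA. destruct HA as [c [<- _]]. apply D_DE.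
Qed.

Lemma D_eq_back H x s A : free_for s x A = true -> D H (Eq s (Var x)) -> D H (subst x s A) -> D H A.
Proof.
  intros Hf He Hs. rewrite <- (subst_id x A). apply D_eqE with (s := s); [exact Hf| apply free_for_self| exact He| exact Hs].
Qed.
Lemma D_eq_fwd H x t A : free_for t x A = true -> D H (Eq (Var x) t) -> D H A -> D H (subst x t A).
Proof.
  intros Hf He Hs. apply D_eqE with (s := Var x); [apply free_for_self| exact Hf| exact He| rewrite subst_id; exact Hs].
Qed.

Lemma closed_Fc F x c y : (forall y, free y F = true -> y = x) -> free y (subst x (Cst c) F) = false.
Proof.
  intros Hfr. destruct (free y (subst x (Cst c) F)) eqn:E; auto.
  apply free_subst_cst in E. destruct E as [E1 E2]. apply Hfr in E1. contradiction.
Qed.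
Lemma D_Prov H A : D H A -> Prov H A.
Proof. intros h. apply h, incl_refl. Qed.

Theorem lemma8 (F : form) (x : nat) (cs : list nat) :
  prenex F ->
  (forall y, free y F = true -> y = x) ->
  cs <> [] ->
  (forall c, occ_cst c F = true -> In c cs) ->
  (safe (All x F) ->
     Prov [SPP cs F] (Iff (All x F) (bigAnd (map (fun c => subst x (Cst c) F) cs)))) /\
  (safe (Ex x F) ->
     Prov [SPP cs F] (Iff (Ex x F) (bigOr (map (fun c => subst x (Cst c) F) cs)))).
Proof.
  intros Hpr Hfr Hcs Hcst.
  assert (Hc0 : exists c0, In c0 cs) by (destruct cs as [|c0 l]; [congruence| exists c0; left; auto]).
  destruct Hc0 as [c0 Hc0].
  set (N := S (maxv F)).
  assert (HN : maxv F < N) by (unfold N; lia).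
  assert (Hcond : conds cs F N F) by (repeat split; auto).
  set (Fc := map (fun c => subst x (Cst c) F) cs).
  assert (HFc : forall y A, In A Fc -> free y A = false).
  { intros y A HA. apply in_map_iff in HA. destruct HA as [c [<- _]]. apply closed_Fc; auto. }
  assert (HxF : forall y, y <> x -> free y F = false).
  { intros y Hy. destruct (free y F) eqn:E; auto. apply Hfr in E; contradiction. }
  split; intros [[Hq [Hsent [Hnd Hss]]] Hsv].
  - rewrite prefix_All in Hnd. simpl in Hnd. inversion Hnd as [|? ? Hx _]; subst.
    assert (Hsvx : sv QAll x true (matrix F) = true) by (apply (Hsv QAll x); left; auto).
    unfold Iff. apply P_andI.
    + apply P_impI. apply Prov_bigAnd_intro. intros A HA. apply in_map_iff in HA.
      destruct HA as [c [<- _]]. apply P_allE; [apply free_for_cst| apply P_ax; left; auto].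
    + apply P_impI. set (G0 := [bigAnd Fc; SPP cs F]).
      assert (Hcl0 : closedG G0).
      { intros C y [<-|[<-|[]]].
        - destruct (free y (bigAnd Fc)) eqn:E; auto. apply free_bigAnd in E.
          destruct E as [A [HA E]]. rewrite (HFc y A HA) in E; discriminate.
        - apply closed_SPP. }
      eapply P_impE; [apply P_impI| apply derive_SPP2; auto; right; left; auto].
      set (G1 := SPP2 cs F N :: G0).
      assert (Hcl1 : closedG G1).
      { intros C y [<-|HC]; [apply closed_SPP2| apply Hcl0; auto]. }
      apply P_allI with (y := x); [apply free_for_self| intros; apply Hcl1; auto| apply bound_self|].
      rewrite subst_id.
      eapply P_orE; [apply (D_dec_inx G1 cs x); apply incl_refl| |].
      * apply D_Prov. apply (D_bigOr_elim _ _ _ (D_hd _ _)). intros A HA.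
        apply in_map_iff in HA. destruct HA as [c [<- Hc]].
        apply (D_eq_back _ x (Cst c)); [apply free_for_cst| apply sym_vc, D_hd|].
        eapply (D_bigAnd_elim _ _ Fc); [apply in_map_iff; exists c; split; [reflexivity| exact Hc]|].
        apply D_ax. right; right; right; left; auto.
      * eapply P_impE.
        -- refine (ML cs F N x c0 QAll F Hpr Hx Hsvx Hcond _ _ _ _).
           ++ intros C z [<-|HC] Hf.
              ** simpl in Hf. rewrite orb_false_r in Hf. apply free_inx in Hf. subst; auto.
              ** rewrite Hcl1 in Hf; auto. discriminate.
           ++ right; left; auto.
           ++ left; auto.
        -- apply D_Prov. eapply (D_bigAnd_elim _ _ Fc); [apply in_map_iff; exists c0; split; [reflexivity| exact Hc0]|].
           apply D_ax. right; right; left; auto.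
  - rewrite prefix_Ex in Hnd. simpl in Hnd. inversion Hnd as [|? ? Hx _]; subst.
    assert (Hsvx : sv QEx x true (matrix F) = true) by (apply (Hsv QEx x); left; auto).
    unfold Iff. apply P_andI.
    + apply P_impI. set (G0 := [Ex x F; SPP cs F]).
      assert (Hcl0 : closedG G0).
      { intros C y [<-|[<-|[]]].
        - simpl. destruct (Nat.eqb_spec x y); simpl; auto.
        - apply closed_SPP. }
      eapply P_impE; [apply P_impI| apply derive_SPP2; auto; right; left; auto].
      set (G1 := SPP2 cs F N :: G0).
      assert (Hcl1 : closedG G1).
      { intros C y [<-|HC]; [apply closed_SPP2| apply Hcl0; auto]. }
      apply P_exE with (x := x) (y := x) (A := F);
        [apply free_for_self| intros; apply Hcl1; auto| apply bound_self| |apply P_ax; right; left; auto|].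
      { destruct (free x (bigOr Fc)) eqn:E; auto. apply free_bigOr in E.
        destruct E as [A [HA E]]. rewrite (HFc x A HA) in E; discriminate. }
      rewrite subst_id.
      eapply P_orE; [apply (D_dec_inx (F :: G1) cs x); apply incl_refl| |].
      * apply D_Prov. apply (D_bigOr_elim _ _ _ (D_hd _ _)). intros A HA.
        apply in_map_iff in HA. destruct HA as [c [<- Hc]].
        eapply (D_bigOr_intro _ _ Fc); [apply in_map_iff; exists c; split; [reflexivity| exact Hc]|].
        apply (D_eq_fwd _ x (Cst c)); [apply free_for_cst| apply D_hd|].
        apply D_ax. right; right; left; auto.
      * eapply P_impE.
        { apply D_Prov, D_impI. eapply (D_bigOr_intro _ _ Fc);
            [apply in_map_iff; exists c0; split; [reflexivity| exact Hc0]| apply D_hd]. }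
        eapply P_impE.
        -- refine (ML cs F N x c0 QEx F Hpr Hx Hsvx Hcond _ _ _ _).
           ++ intros C z HC Hf. destruct HC as [<-|[<-|HC]].
              ** simpl in Hf. rewrite orb_false_r in Hf. apply free_inx in Hf. subst; auto.
              ** apply free_not_prefix; auto.
              ** rewrite Hcl1 in Hf; auto. discriminate.
           ++ right; right; left; auto.
           ++ left; auto.
        -- apply P_ax. right; left; auto.
    + apply D_Prov. apply D_impI. apply (D_bigOr_elim _ _ _ (D_hd _ _)). intros A HA.
      apply in_map_iff in HA. destruct HA as [c [<- Hc]].
      apply D_exI with (t := Cst c); [apply free_for_cst| apply D_hd].
Qed.
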